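(* Let $\mathfrak{A}[\tau]$ be a *-semisimple topological partial *-algebra with multiplication core $\mathfrak{B}$ containing the unit $e$ of $\mathfrak{A}$. Let $x,y\in\mathfrak{A}$ be such that the strong product $x\bullet y$ is well-defined with respect to $\mathcal{M}=\mathcal{P}_{\mathfrak{B}}(\mathfrak{A})$. Then for every quasi-symmetric $(\tau,\mathsf{t}_s)$-continuous *-representation $\pi$ of $\mathfrak{A}$ with $\pi(\mathfrak{B})\subset\mathcal{L}^\dagger(\mathcal{D}(\pi))$ and $\pi(e)=I_{\mathcal{D}(\pi)}$, the strong product $\pi(x)\circ\pi(y)$ is well-defined and $\pi(x\bullet y)=\pi(x)\circ\pi(y)$.
   Context: A partial *-algebra is a complex vector space $\mathfrak{A}$ with a conjugate-linear involution and a distributive partial multiplication on $\Gamma\subset\mathfrak{A}\times\mathfrak{A}$ such that $(x,y)\in\Gamma$ iff $(y^*,x^* )\in\Gamma$, then $(xy)^*=y^*x^*$; $L(y)=\{x:(x,y)\in\Gamma\}$, $R(y)=\{x:(y,x)\in\Gamma\}$; $R\mathfrak{A}$, $L\mathfrak{A}$ are the universal right/left multipliers; a unit is $e=e^*\in R\mathfrak{A}\cap L\mathfrak{A}$ with $xe=ex=x$. For a dense subspace $\mathcal{D}$ of a Hilbert space $\mathcal{H}$, $\mathcal{L}^\dagger(\mathcal{D},\mathcal{H})$ is the set of linear operators $X$ with domain $\mathcal{D}$ and $D(X^* )\supseteq\mathcal{D}$, $X^\dagger=X^*|_{\mathcal{D}}$, weak product $X_1\Box X_2:=(X_1^\dagger)^*X_2$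 defined when $X_2\mathcal{D}\subset D((X_1^\dagger)^* )$ and $X_1^*\mathcal{D}\subset D(X_2^* )$; $\mathcal{L}^\dagger(\mathcal{D})=\{X\in\mathcal{L}^\dagger(\mathcal{D},\mathcal{H}):X\mathcal{D}\subset\mathcal{D},X^\dagger\mathcal{D}\subset\mathcal{D}\}$. The strong product $X\circ Y$ of $X,Y\in\mathcal{L}^\dagger(\mathcal{D},\mathcal{H})$ is well-defined when $Y\mathcal{D}\subset D(\overline{X})$ and $X^\dagger\mathcal{D}\subset D(\overline{Y^\dagger})$, and then $X\circ Y=\overline{X}Y$. A *-representation is a linear $\pi:\mathfrak{A}\to\mathcal{L}^\dagger(\mathcal{D}(\pi),\mathcal{H})$ with $\pi(x^* )=\pi(x)^\dagger$ such that $x\in L(y)$ implies $\pi(x)\Box\pi(y)$ defined and equal to $\pi(xy)$; $(\tau,\mathsf{t}_s)$-continuous means $x\mapsto\pi(x)\xi$ is continuous for each $\xi\in\mathcal{D}(\pi)$. $\pi$ is quasi-symmetric if for every $x\in\mathfrak{A}$: $\bigcap_{z\in L(x)}D\big((\pi(x)^*|_{\pi(z^* )\mathcal{D}(\pi)})^*\big)=D(\overline{\pi(x)})$ and $\bigcap_{v\in R(x)}D\big((\pi(x^* )^*|_{\pi(v)\mathcal{D}(\pi)})^*\big)=D(\overline{\pi(x)^\dagger})$. A topological partial *-algebra is a partial *-algebra with a Hausdorff locally convex topology $\tau$ such that each map $y\in R(x)\mapsto xy$ is closed. $\tau^*$ is given by seminorms $\max\{p(x),p(x^* )\}$. A multiplication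 core is a subspace $\mathfrak{B}\subseteq R\mathfrak{A}$ with: $e\in\mathfrak{B}$ if a unit exists; $\mathfrak{B}\mathfrak{B}\subseteq\mathfrak{B}$; $\mathfrak{B}$ $\tau^*$-dense; $x\mapsto xb$ $\tau$-continuous for $b\in\mathfrak{B}$; $b^*(xc)=(b^*x)c$ for $x\in\mathfrak{A}$, $b,c\in\mathfrak{B}$. For a positive sesquilinear form $\varphi$ on $\mathfrak{A}\times\mathfrak{A}$, $\lambda_\varphi(x)=x+N_\varphi$ ($N_\varphi=\{x:\varphi(x,x)=0\}$) in the completion $\mathcal{H}_\varphi$ of $\mathfrak{A}/N_\varphi$; $\varphi$ is an ips-form with core $\mathfrak{B}$ if $\mathfrak{B}\subset R\mathfrak{A}$, $\lambda_\varphi(\mathfrak{B})$ is dense in $\mathcal{H}_\varphi$, $\varphi(xa,b)=\varphi(a,x^*b)$ and $\varphi(x^*a,yb)=\varphi(a,(xy)b)$ whenever $x\in L(y)$, for $a,b\in\mathfrak{B}$. $\mathcal{P}_{\mathfrak{B}}(\mathfrak{A})$ is the set of ips-forms with core $\mathfrak{B}$ that are $\tau$-continuous ($|\varphi(x,y)|\le p(x)p(y)$ for some continuous seminorm $p$). $\mathfrak{A}$ is *-semisimple if for every $x\neq0$ there is a $(\tau,\mathsf{t}_s)$-continuous *-representation $\pi$ with $\pi(x)\neq0$. Strong product: for $x,y\in\mathfrak{A}$, $x\bullet y$ is well-defined with respect to $\mathcal{M}$ if $x\in L(y)$ and (sm$_1$) $\varphi((xy)a,z^*b)=\varphi(ya,(x^*z^*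 )b)$ for all $z\in L(x)$, $\varphi\in\mathcal{M}$, $a,b\in\mathfrak{B}$; (sm$_2$) $\varphi((y^*x^* )a,vb)=\varphi(x^*a,(yv)b)$ for all $v\in R(y)$, $\varphi\in\mathcal{M}$, $a,b\in\mathfrak{B}$; then $x\bullet y:=xy$. *)

(* Defs.v *)
From HB Require Import structures.
From mathcomp Require Import all_boot all_order all_algebra.
From mathcomp Require Import reals.
From mathcomp Require Import complex.
From Stdlib Require List.
Set Implicit Arguments. Unset Strict Implicit. Unset Printing Implicit Defensive.
Import Order.TTheory GRing.Theory Num.Theory.
Local Open Scope ring_scope.

Section Hilbert.
Context (R : realType) (H : lmodType R[i]) (ip : H -> H -> R[i]).

Definition hnorm (v : H) : R[i] := sqrtC (ip v v).

Definition is_inner_product : Prop :=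
  [/\ (forall (a : R[i]) u v w, ip (a *: u + v) w = a * ip u w + ip v w),
      (forall u v, ip u v = (ip v u)^*),
      (forall u, 0 <= ip u u) &
      (forall u, ip u u = 0 -> u = 0)].

Definition hcauchy (u : nat -> H) : Prop :=
  forall eps : R[i], 0 < eps -> exists N, forall m n,
    (N <= m)%N -> (N <= n)%N -> hnorm (u m - u n) < eps.

Definition hcvg (u : nat -> H) (l : H) : Prop :=
  forall eps : R[i], 0 < eps -> exists N, forall n, (N <= n)%N -> hnorm (u n - l) < eps.

Definition is_hilbert : Prop :=
  is_inner_product /\ forall u, hcauchy u -> exists l, hcvg u l.

Definition dense_subspace (D : H -> Prop) : Prop :=
  [/\ D 0,
      (forall (a : R[i]) u v, D u -> D v -> D (a *: u + v)) &
      (forall h (eps : R[i]), 0 < eps -> exists d, D d /\ hnorm (h - d) < eps)].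

(* (possibly multivalued) operators as graphs *)
Definition graph := H -> H -> Prop.
Definition gdom (G : graph) (u : H) : Prop := exists v, G u v.
Definition op_graph (D : H -> Prop) (X : H -> H) : graph := fun u v => D u /\ v = X u.
Definition adjoint (G : graph) : graph := fun v w => forall u z, G u z -> ip z v = ip u w.
Definition gclosure (G : graph) : graph := fun u v =>
  forall eps : R[i], 0 < eps ->
    exists u' v', [/\ G u' v', hnorm (u - u') < eps & hnorm (v - v') < eps].
Definition grestrict (G : graph) (S : H -> Prop) : graph := fun u v => S u /\ G u v.
Definition image (D : H -> Prop) (f : H -> H) : H -> Prop := fun w => exists u, D u /\ w = f u.

Definition dagger (D : H -> Prop) (X : H -> H) : graph := grestrict (adjoint (op_graph D X)) D.

Definition in_Ldagger (D : H -> Prop) (X : H -> H) : Prop :=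
  (forall (a : R[i]) u v, D u -> D v -> X (a *: u + v) = a *: X u + X v) /\
  (forall u, D u -> gdom (adjoint (op_graph D X)) u).

Definition in_LdaggerD (D : H -> Prop) (X : H -> H) : Prop :=
  [/\ in_Ldagger D X, (forall u, D u -> D (X u)) & (forall u v, dagger D X u v -> D v)].

Definition weak_product_eq (D : H -> Prop) (X1 X2 Z : H -> H) : Prop :=
  [/\ (forall u, D u -> gdom (adjoint (dagger D X1)) (X2 u)),
      (forall u v, dagger D X1 u v -> gdom (adjoint (op_graph D X2)) v) &
      (forall u, D u -> adjoint (dagger D X1) (X2 u) (Z u))].

Definition strong_product_op_wd (D : H -> Prop) (X Y : H -> H) : Prop :=
  (forall u, D u -> gdom (gclosure (op_graph D X)) (Y u)) /\
  (forall u v, dagger D X u v -> gdom (gclosure (dagger D Y)) v).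

Definition strong_product_op_eq (D : H -> Prop) (X Y Z : H -> H) : Prop :=
  forall u, D u -> gclosure (op_graph D X) (Y u) (Z u).

End Hilbert.

Section PartialAlgebra.
Context (R : realType) (A : lmodType R[i]) (star : A -> A)
        (Gam : A -> A -> Prop) (mul : A -> A -> A).

Definition partial_star_algebra : Prop :=
  [/\ (forall (a : R[i]) x y, star (a *: x + y) = a^* *: star x + star y),
      (forall x, star (star x) = x),
      (forall x y, Gam x y <-> Gam (star y) (star x)),
      (forall x y, Gam x y -> star (mul x y) = mul (star y) (star x)) &
      (forall x y z (a b : R[i]), Gam x y -> Gam x z ->
          Gam x (a *: y + b *: z) /\ mul x (a *: y + b *: z) = a *: mul x y + b *: mul x z) /\
      (forall x y z (a b : R[i]), Gam y x -> Gam z x ->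
          Gam (a *: y + b *: z) x /\ mul (a *: y + b *: z) x = a *: mul y x + b *: mul z x)].

Definition RA (x : A) : Prop := forall y, Gam y x.
Definition LA (x : A) : Prop := forall y, Gam x y.

Definition is_unit (e : A) : Prop :=
  [/\ star e = e, RA e, LA e & forall x, mul x e = x /\ mul e x = x].

Definition subspace (B : A -> Prop) : Prop :=
  B 0 /\ forall (a : R[i]) x y, B x -> B y -> B (a *: x + y).

Definition seminorm (p : A -> R[i]) : Prop :=
  [/\ (forall x, 0 <= p x), (forall x y, p (x + y) <= p x + p y) &
      (forall (a : R[i]) x, p (a *: x) = `|a| * p x)].

Definition tnbhs (P : (A -> R[i]) -> Prop) (x : A) (U : A -> Prop) : Prop :=
  exists (s : seq (A -> R[i])) (eps : R[i]),
    [/\ (forall p, List.In p s -> P p), 0 < eps &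
        forall y, (forall p, List.In p s -> p (y - x) < eps) -> U y].

Definition hausdorff (P : (A -> R[i]) -> Prop) : Prop :=
  forall x y, x <> y -> exists U V,
    [/\ tnbhs P x U, tnbhs P y V & forall z, ~ (U z /\ V z)].

Definition tcont (P : (A -> R[i]) -> Prop) (f : A -> A) : Prop :=
  forall x0 V, tnbhs P (f x0) V -> tnbhs P x0 (fun x => V (f x)).

(* the map y in R(x) |-> xy is closed (closed graph in A x A) *)
Definition left_mult_closed (P : (A -> R[i]) -> Prop) (x : A) : Prop :=
  forall y z,
    (forall U V, tnbhs P y U -> tnbhs P z V -> exists y', [/\ Gam x y', U y' & V (mul x y')]) ->
    Gam x y /\ mul x y = z.

Definition topological_partial_star_algebra (P : (A -> R[i]) -> Prop) : Prop :=
  [/\ partial_star_algebra, (forall p, P p -> seminorm p), hausdorff P &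
      forall x, left_mult_closed P x].

(* the family of seminorms generating tau^* *)
Definition Pstar (P : (A -> R[i]) -> Prop) (q : A -> R[i]) : Prop :=
  exists p, P p /\ q = (fun x => Num.max (p x) (p (star x))).

Definition multiplication_core (P : (A -> R[i]) -> Prop) (B : A -> Prop) : Prop :=
  [/\ subspace B /\ (forall b, B b -> RA b),
      (forall e, is_unit e -> B e) /\
      (forall b c, B b -> B c -> B (mul b c)),
      (forall x U, tnbhs (Pstar P) x U -> exists b, B b /\ U b),
      (forall b, B b -> tcont P (fun x => mul x b)) &
      (forall x b c, B b -> B c ->
         [/\ Gam (star b) (mul x c), Gam (star b) x &
             mul (star b) (mul x c) = mul (mul (star b) x) c])].

Definition pos_sesq_form (phi : A -> A -> R[i]) : Prop :=
  [/\ (forall (a : R[i]) x y z, phi (a *: x + y) z = a * phi x z + phi y z),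
      (forall (a : R[i]) x y z, phi z (a *: x + y) = a^* * phi z x + phi z y) &
      (forall x, 0 <= phi x x)].

Definition ips_form (B : A -> Prop) (phi : A -> A -> R[i]) : Prop :=
  [/\ pos_sesq_form phi,
      (forall b, B b -> RA b),
      (* lambda_phi(B) dense in H_phi *)
      (forall x (eps : R[i]), 0 < eps -> exists b, B b /\ sqrtC (phi (x - b) (x - b)) < eps),
      (forall x a b, B a -> B b -> phi (mul x a) b = phi a (mul (star x) b)) &
      (forall x y a b, Gam x y -> B a -> B b ->
          phi (mul (star x) a) (mul y b) = phi a (mul (mul x y) b))].

Definition cont_seminorm (P : (A -> R[i]) -> Prop) (q : A -> R[i]) : Prop :=
  seminorm q /\ forall x0 (eps : R[i]), 0 < eps -> tnbhs P x0 (fun x => `|q x - q x0| < eps).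

Definition tau_cont_form (P : (A -> R[i]) -> Prop) (phi : A -> A -> R[i]) : Prop :=
  exists q, cont_seminorm P q /\ forall x y, `|phi x y| <= q x * q y.

Definition PB (P : (A -> R[i]) -> Prop) (B : A -> Prop) (phi : A -> A -> R[i]) : Prop :=
  ips_form B phi /\ tau_cont_form P phi.

Definition strong_product_wd (M : (A -> A -> R[i]) -> Prop) (B : A -> Prop) (x y : A) : Prop :=
  [/\ Gam x y,
      (forall z phi a b, Gam z x -> M phi -> B a -> B b ->
         phi (mul (mul x y) a) (mul (star z) b) = phi (mul y a) (mul (mul (star x) (star z)) b)) &
      (forall v phi a b, Gam y v -> M phi -> B a -> B b ->
         phi (mul (mul (star y) (star x)) a) (mul v b) = phi (mul (star x) a) (mul (mul y v) b))].

Definition star_rep (H : lmodType R[i]) (ip : H -> H -> R[i]) (D : H -> Prop) (pi : A -> H -> H) : Prop :=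
  [/\ dense_subspace ip D,
      (forall (a : R[i]) x y u, D u -> pi (a *: x + y) u = a *: pi x u + pi y u),
      (forall x, in_Ldagger ip D (pi x)),
      (forall x u, D u -> adjoint ip (op_graph D (pi x)) u (pi (star x) u)) &
      (forall x y, Gam x y -> weak_product_eq ip D (pi x) (pi y) (pi (mul x y)))].

Definition rep_cont (P : (A -> R[i]) -> Prop) (H : lmodType R[i]) (ip : H -> H -> R[i])
  (D : H -> Prop) (pi : A -> H -> H) : Prop :=
  forall u, D u -> forall x0 (eps : R[i]), 0 < eps ->
    tnbhs P x0 (fun x => hnorm ip (pi x u - pi x0 u) < eps).

Definition quasi_symmetric (H : lmodType R[i]) (ip : H -> H -> R[i])
  (D : H -> Prop) (pi : A -> H -> H) : Prop :=
  forall x,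
    (forall u, (forall z, Gam z x ->
        gdom (adjoint ip (grestrict (adjoint ip (op_graph D (pi x))) (image D (pi (star z))))) u)
      <-> gdom (gclosure ip (op_graph D (pi x))) u) /\
    (forall u, (forall v, Gam x v ->
        gdom (adjoint ip (grestrict (adjoint ip (op_graph D (pi (star x)))) (image D (pi v)))) u)
      <-> gdom (gclosure ip (dagger ip D (pi x))) u).

Definition star_semisimple (P : (A -> R[i]) -> Prop) : Prop :=
  forall x, x <> 0 -> exists (H : lmodType R[i]) (ip : H -> H -> R[i]) (D : H -> Prop)
    (pi : A -> H -> H),
    [/\ is_hilbert ip, star_rep ip D pi, rep_cont P ip D pi & exists u, D u /\ pi x u <> 0].

End PartialAlgebra.

(* Main.v *)
Require Import Defs.
From HB Require Import structures.
From mathcomp Require Import all_boot all_order all_algebra.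
From mathcomp Require Import reals complex.
From mathcomp Require Import ring.
Import Order.TTheory GRing.Theory Num.Theory.
Set Implicit Arguments. Unset Strict Implicit.
Local Open Scope ring_scope.

Section HilbertLemmas.
Context (R : realType) (H : lmodType R[i]) (ip : H -> H -> R[i]).
Hypothesis Hip : is_inner_product ip.

Lemma ip_linl a u v w : ip (a *: u + v) w = a * ip u w + ip v w.
Proof. by case: Hip => h *; apply: h. Qed.
Lemma ipC u v : ip u v = (ip v u)^*.
Proof. by case: Hip => _ h *; apply: h. Qed.
Lemma ip_ge0 u : 0 <= ip u u.
Proof. by case: Hip => _ _ h *; apply: h. Qed.
Lemma ip_def u : ip u u = 0 -> u = 0.
Proof. by case: Hip => _ _ _ h *; apply: h. Qed.
Lemma ipDl u v w : ip (u + v) w = ip u w + ip v w.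
Proof. by rewrite -[u]scale1r ip_linl mul1r scale1r. Qed.
Lemma ip0l w : ip 0 w = 0.
Proof. by apply: (addrI (ip 0 w)); rewrite -ipDl !addr0. Qed.
Lemma ipZl a u w : ip (a *: u) w = a * ip u w.
Proof. by rewrite -[a *: u]addr0 ip_linl ip0l addr0. Qed.
Lemma ipNl u w : ip (- u) w = - ip u w.
Proof. by rewrite -scaleN1r ipZl mulN1r. Qed.
Lemma ipBl u v w : ip (u - v) w = ip u w - ip v w.
Proof. by rewrite ipDl ipNl. Qed.
Lemma ipDr u v w : ip w (u + v) = ip w u + ip w v.
Proof. by rewrite ipC ipDl rmorphD /= -!ipC. Qed.
Lemma ipZr a u w : ip w (a *: u) = a^* * ip w u.
Proof. by rewrite ipC ipZl rmorphM /= -ipC. Qed.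
Lemma ip0r w : ip w 0 = 0.
Proof. by rewrite ipC ip0l conjC0. Qed.
Lemma ipNr u w : ip w (- u) = - ip w u.
Proof. by rewrite ipC ipNl rmorphN /= -ipC. Qed.
Lemma ipBr u v w : ip w (u - v) = ip w u - ip w v.
Proof. by rewrite ipDr ipNr. Qed.
Lemma ip_real u : ip u u \is Num.real.
Proof. by apply: ger0_real; apply: ip_ge0. Qed.

Lemma hnorm_ge0 u : 0 <= hnorm ip u.
Proof. by rewrite /hnorm sqrtC_ge0 ip_ge0. Qed.
Lemma hnormK u : hnorm ip u ^+ 2 = ip u u.
Proof. by rewrite /hnorm sqrtCK. Qed.

Lemma CS_sq u v : ip u v * (ip u v)^* <= ip u u * ip v v.
Proof.
have [->|v0] := eqVneq v 0.
  by rewrite ip0r mul0r ip0r mulr0.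
have n0 : ip v v != 0 by apply: contra v0 => /eqP/ip_def ->.
have npos : 0 < ip v v by rewrite lt_def n0 ip_ge0.
have cn : (ip v v)^* = ip v v by rewrite geC0_conj // ip_ge0.
set c := ip u v; set n := ip v v.
have := ip_ge0 (u - (c / n) *: v).
rewrite ipBl !ipBr !ipZl !ipZr rmorphM fmorphV /= cn -/c -/n.
rewrite [ip v u]ipC -/c.
have -> : ip u u - c^* / n * c - (c / n * c^* - c / n * (c^* / n * n)) = ip u u - c * c^* / n.
  rewrite -/c; field; exact: n0.
by rewrite subr_ge0 ler_pdivrMr.
Qed.

Lemma CS u v : `|ip u v| <= hnorm ip u * hnorm ip v.
Proof.
rewrite /hnorm -sqrtCM ?nnegrE ?ip_ge0 //.
rewrite -(sqrCK (normr_ge0 (ip u v))) ler_sqrtC ?nnegrE ?exprn_ge0 ?mulr_ge0 ?ip_ge0 //.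
by rewrite normCK CS_sq.
Qed.

Lemma Re2_le (z : R[i]) : z + z^* <= 2 * `|z|.
Proof.
have -> : z + z^* = 2 * 'Re z by rewrite ReE; field.
by rewrite ler_pM2l // (leif_Re_Creal z).
Qed.

Lemma hnormD u v : hnorm ip (u + v) <= hnorm ip u + hnorm ip v.
Proof.
have h0 : 0 <= hnorm ip u + hnorm ip v by rewrite addr_ge0 ?hnorm_ge0.
rewrite {1}/hnorm -(sqrCK h0) ler_sqrtC ?nnegrE ?ip_ge0 ?exprn_ge0 //.
rewrite sqrrD !hnormK ipDl !ipDr [ip v u]ipC.
have := Re2_le (ip u v); have := CS u v.
move=> h1 h2.
have h3 : ip u v + (ip u v)^* <= 2 * (hnorm ip u * hnorm ip v).
  apply: (le_trans h2); rewrite ler_pM2l //.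
have -> : ip u u + ip u v + ((ip u v)^* + ip v v) = ip u u + ip v v + (ip u v + (ip u v)^*) by ring.
have -> : ip u u + hnorm ip u * hnorm ip v *+ 2 + ip v v = ip u u + ip v v + 2 * (hnorm ip u * hnorm ip v).
  by rewrite mulr2n; ring.
by rewrite lerD2l.
Qed.

Lemma hnormZ a u : hnorm ip (a *: u) = `|a| * hnorm ip u.
Proof.
rewrite /hnorm ipZl ipZr mulrA -normCK -[_ ^+ 2 * _]/(_ * _).
by rewrite sqrtCM ?nnegrE ?exprn_ge0 ?ip_ge0 // sqrCK.
Qed.

Lemma hnormN u : hnorm ip (- u) = hnorm ip u.
Proof. by rewrite /hnorm ipNl ipNr opprK. Qed.

Lemma hnormB u v : hnorm ip (u - v) = hnorm ip (v - u).
Proof. by rewrite -hnormN opprB. Qed.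

Lemma hnorm_eq0 u : hnorm ip u = 0 -> u = 0.
Proof. by move/eqP; rewrite /hnorm sqrtC_eq0 => /eqP /ip_def. Qed.

Lemma hnorm_real u : hnorm ip u \is Num.real.
Proof. by apply: ger0_real; apply: hnorm_ge0. Qed.

Lemma hnorm_rev u v : `|hnorm ip u - hnorm ip v| <= hnorm ip (u - v).
Proof.
rewrite real_ler_norml ?rpredB ?hnorm_real //.
apply/andP; split.
  rewrite lerNl opprB lerBlDr hnormB.
  by have := hnormD (v - u) u; rewrite subrK.
by rewrite lerBlDr; have := hnormD (u - v) v; rewrite subrK.
Qed.

Lemma small_eq0 (x : R[i]) : 0 <= x -> (forall eps, 0 < eps -> x <= eps) -> x = 0.
Proof.
move=> x0 h; apply/eqP; rewrite eq_le x0 andbT; apply/negP => xn.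
have xp : 0 < x by rewrite lt_def x0 andbT; apply/eqP => x0e; move: xn; rewrite x0e lexx.
have := h (x / 2) (divr_gt0 xp (ltr0Sn _ 1)).
have : x / 2 < x by rewrite -subr_gt0 (_ : x - x / 2 = x / 2); [exact: divr_gt0 | field].
by move=> lt le; have := lt_le_trans lt le; rewrite ltxx.
Qed.

Lemma uniq_ip (D : H -> Prop) (w1 w2 : H) : dense_subspace ip D ->
  (forall d, D d -> ip d w1 = ip d w2) -> w1 = w2.
Proof.
case=> _ _ dens h.
have hz : forall d, D d -> ip d (w1 - w2) = 0 by move=> d Dd; rewrite ipBr h // subrr.
apply/eqP; rewrite -subr_eq0; apply/eqP; apply: hnorm_eq0.
move: (w1 - w2) hz => k hz.
apply: small_eq0; first exact: hnorm_ge0.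
move=> eps ep.
have [kp|] := boolP (0 < hnorm ip k); last first.
  move=> kn; have : hnorm ip k = 0.
    by apply/eqP; rewrite eq_le hnorm_ge0 andbT; move: kn; rewrite lt_def hnorm_ge0 andbT negbK => /eqP ->.
  by move->; exact: ltW.
have [d [Dd hd]] := dens k eps ep.
have e1 : ip k k = ip (k - d) k by rewrite ipBl (hz d Dd) subr0.
have : hnorm ip k ^+ 2 <= eps * hnorm ip k.
  rewrite hnormK.
  have : `|ip k k| = ip k k by rewrite ger0_norm ?ip_ge0.
  move=> <-; rewrite e1; apply: (le_trans (CS _ _)).
  by rewrite ler_pM2r // ltW.
by rewrite expr2 ler_pM2r.
Qed.


Definition linD (D : H -> Prop) (f : H -> H) :=
  forall (a : R[i]) u v, D u -> D v -> f (a *: u + v) = a *: f u + f v.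

Lemma polar (D : H -> Prop) (f g k l : H -> H) :
  (forall (a : R[i]) u v, D u -> D v -> D (a *: u + v)) ->
  linD D f -> linD D g -> linD D k -> linD D l ->
  (forall x, D x -> ip (f x) (g x) = ip (k x) (l x)) ->
  forall x y, D x -> D y -> ip (f x) (g y) = ip (k x) (l y).
Proof.
move=> DD lf lg lk ll h x y Dx Dy.
have E1 := h _ (DD 1 y x Dy Dx).
rewrite (lf _ _ _ Dy Dx) (lg _ _ _ Dy Dx) (lk _ _ _ Dy Dx) (ll _ _ _ Dy Dx) in E1.
rewrite !ipDl !ipDr !ipZl !ipZr conjC1 !mul1r (h x Dx) (h y Dy) in E1.
have E2 := h _ (DD 'i y x Dy Dx).
rewrite (lf _ _ _ Dy Dx) (lg _ _ _ Dy Dx) (lk _ _ _ Dy Dx) (ll _ _ _ Dy Dx) in E2.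
rewrite !ipDl !ipDr !ipZl !ipZr conjCi (h x Dx) (h y Dy) in E2.
move/eqP: E1; rewrite -subr_eq0 => /eqP E1.
move/eqP: E2; rewrite -subr_eq0 => /eqP E2.
have i0 : ('i : R[i]) != 0 by rewrite -normr_eq0 normCi oner_eq0.
apply/eqP; rewrite -subr_eq0.
set p1 := ip (f x) (g y) in E1 E2 *; set q1 := ip (k x) (l y) in E1 E2 *.
set p2 := ip (f y) (g x) in E1 E2; set q2 := ip (k y) (l x) in E1 E2.
set a1 := ip (k y) (l y) in E1 E2; set a2 := ip (k x) (l x) in E1 E2.
clearbody p1 q1 p2 q2 a1 a2.
have -> : p1 - q1 = ((a1 + p2 + (p1 + a2) - (a1 + q2 + (q1 + a2)))
   - ('i * (- 'i * a1) + 'i * p2 + (- 'i * p1 + a2) - ('i * (- 'i * a1) + 'i * q2 + (- 'i * q1 + a2))) / 'i) / 2.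
  by field.
by rewrite E1 E2 !mul0r subrr mul0r.
Qed.


Lemma approx0 (c a b : R[i]) : 0 <= a -> 0 <= b ->
  (forall eps, 0 < eps -> `|c| <= a * eps + b * eps) -> c = 0.
Proof.
move=> a0 b0 h; apply/eqP; rewrite -normr_eq0; apply/eqP.
apply: small_eq0 => // eps ep.
have Kp : 0 < a + b + 1 by rewrite ltr_wpDl // addr_ge0.
have := h (eps / (a + b + 1)) (divr_gt0 ep Kp).
move/le_trans; apply.
rewrite -mulrDl.
apply: (@le_trans _ _ ((a + b + 1) * (eps / (a + b + 1)))).
  by rewrite ler_wpM2r ?lerDl // ltW // divr_gt0.
by rewrite mulrC divfK ?gt_eqF.
Qed.

End HilbertLemmas.

Lemma max_ge (R : realType) (a b : R[i]) : a <= Num.max a b.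
Proof. by rewrite /Num.max /Order.max; case: ifP => [/ltW|]. Qed.

Section Main.
Context (R : realType) (A : lmodType R[i]) (star : A -> A)
  (Gam : A -> A -> Prop) (mul : A -> A -> A) (P : (A -> R[i]) -> Prop)
  (B : A -> Prop) (e : A) (x y : A)
  (H : lmodType R[i]) (ip : H -> H -> R[i]) (D : H -> Prop) (pi : A -> H -> H).
Hypothesis Htop : topological_partial_star_algebra star Gam mul P.
Hypothesis Hcore : multiplication_core star Gam mul P B.
Hypothesis Hunit : is_unit star Gam mul e.
Hypothesis HBe : B e.
Hypothesis Hsp : strong_product_wd star Gam mul (PB star Gam mul P B) B x y.
Hypothesis Hh : is_hilbert ip.
Hypothesis Hrep : star_rep star Gam mul ip D pi.
Hypothesis Hcont : rep_cont P ip D pi.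
Hypothesis Hqs : quasi_symmetric star Gam ip D pi.
Hypothesis HBD : forall b, B b -> in_LdaggerD ip D (pi b).

Let Hip : is_inner_product ip := proj1 Hh.

Lemma starK z : star (star z) = z.
Proof. by case: Htop => [[_ h _ _ _]] _ _ _; apply: h. Qed.

Lemma GamS z w : Gam z w -> Gam (star w) (star z).
Proof. by case: Htop => [[_ _ h _ _]] _ _ _; move/h. Qed.

Lemma Ddense : dense_subspace ip D.
Proof. by case: Hrep. Qed.

Lemma DD a u v : D u -> D v -> D (a *: u + v).
Proof. by case: Ddense => _ h _; apply: h. Qed.

Lemma pi_lin a z w u : D u -> pi (a *: z + w) u = a *: pi z u + pi w u.
Proof. by case: Hrep => _ h _ _ _; apply: h. Qed.

Lemma pi_sub z w u : D u -> pi (z - w) u = pi z u - pi w u.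
Proof.
move=> Du; have -> : z - w = (-1) *: w + z by rewrite scaleN1r addrC.
by rewrite pi_lin // scaleN1r addrC.
Qed.

Lemma pi_add z w u : D u -> pi (z + w) u = pi z u + pi w u.
Proof. by move=> Du; have := pi_lin 1 z w Du; rewrite !scale1r. Qed.

Lemma pi0 u : D u -> pi 0 u = 0.
Proof.
move=> Du; apply: (addrI (pi 0 u)); rewrite addr0 -pi_add //.
by rewrite addr0.
Qed.

Lemma pi_scale a z u : D u -> pi (a *: z) u = a *: pi z u.
Proof. by move=> Du; rewrite -[a *: z]addr0 pi_lin // pi0 // addr0. Qed.

Lemma op_lin z : linD D (pi z).
Proof. by case: Hrep => _ _ h _ _; case: (h z). Qed.

Lemma adjL z u d : D u -> D d -> ip (pi z d) u = ip d (pi (star z) u).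
Proof.
case: Hrep => _ _ _ h _ Du Dd.
by apply: (h z u Du d (pi z d)); split.
Qed.

Lemma adjL' z u d : D u -> D d -> ip (pi (star z) d) u = ip d (pi z u).
Proof. by move=> Du Dd; rewrite adjL // starK. Qed.

Lemma uniqD w1 w2 : (forall d, D d -> ip d w1 = ip d w2) -> w1 = w2.
Proof. exact: (uniq_ip Hip Ddense). Qed.

Lemma dag_in z d : D d -> dagger ip D (pi z) d (pi (star z) d).
Proof. by case: Hrep => _ _ _ h _ Dd; split => //; apply: h. Qed.

Lemma dag_val z a b : dagger ip D (pi z) a b -> b = pi (star z) a.
Proof.
case=> Da hadj; apply: uniqD => d Dd.
by rewrite -(hadj d (pi z d)) ?adjL.
Qed.

Lemma wp z w u d : Gam z w -> D u -> D d ->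
  ip (pi (star z) d) (pi w u) = ip d (pi (mul z w) u).
Proof.
case: Hrep => _ _ _ _ h G Du Dd.
by case: (h z w G) => _ _ h3; apply: (h3 u Du d); apply: dag_in.
Qed.

Lemma wpD z a d : Gam z a -> D d -> D (pi a d) -> pi (mul z a) d = pi z (pi a d).
Proof.
move=> G Dd Dad; apply: uniqD => d' Dd'.
by rewrite -wp // adjL'.
Qed.


Lemma BRA b : B b -> RA Gam b.
Proof. by case: Hcore => [[_ h]] _ _ _ _; apply: h. Qed.

Lemma BD b u : B b -> D u -> D (pi b u).
Proof. by move=> Bb; case: (HBD Bb) => _ h _; apply: h. Qed.

Lemma core_dense z U : tnbhs (Pstar star P) z U -> exists b, B b /\ U b.
Proof. by case: Hcore => _ _ h _ _; apply: h. Qed.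

Lemma tnbhs_star z U : tnbhs P z U -> tnbhs (Pstar star P) z U.
Proof.
case=> s [eps [hs ep hU]].
exists (List.map (fun p => fun w => Num.max (p w) (p (star w))) s), eps; split => //.
  move=> q /List.in_map_iff [p [<- ps]]; exists p; split => //; exact: hs.
move=> w hw; apply: hU => p ps.
have := hw _ (List.in_map (fun p => fun w => Num.max (p w) (p (star w))) _ _ ps).
by apply: le_lt_trans; apply: max_ge.
Qed.

Lemma tnbhs_mono (Q : (A -> R[i]) -> Prop) z (U V : A -> Prop) :
  tnbhs Q z U -> (forall w, U w -> V w) -> tnbhs Q z V.
Proof.
case=> s [eps [hs ep hU]] hUV; exists s, eps; split => // w hw.
by apply: hUV; apply: hU.
Qed.

Lemma phiPB xi : D xi -> PB star Gam mul P B (fun a b => ip (pi a xi) (pi b xi)).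
Proof.
move=> Dxi; split.
  split.
  - split.
    + by move=> a z w v; rewrite pi_lin // (ip_linl Hip).
    + by move=> a z w v; rewrite pi_lin // (ipDr Hip) (ipZr Hip).
    + by move=> z; apply: (ip_ge0 Hip).
  - exact: BRA.
  - move=> z eps ep.
    have [b [Bb hb]] := core_dense (tnbhs_star (Hcont Dxi z ep)).
    exists b; split => //.
    change (hnorm ip (pi (z - b) xi) < eps).
    by rewrite pi_sub // (hnormB Hip).
  - move=> z a b Ba Bb.
    have Da := BD Ba Dxi; have Db := BD Bb Dxi.
    rewrite (wpD (BRA Ba z) Dxi Da) (wpD (BRA Bb (star z)) Dxi Db).
    exact: adjL.
  - move=> z w a b G Ba Bb.
    have Da := BD Ba Dxi; have Db := BD Bb Dxi.
    rewrite (wpD (BRA Ba (star z)) Dxi Da) (wpD (BRA Bb w) Dxi Db).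
    rewrite (wpD (BRA Bb (mul z w)) Dxi Db).
    exact: wp.
exists (fun z => hnorm ip (pi z xi)); split.
  split.
    split.
    + by move=> z; apply: (hnorm_ge0 Hip).
    + by move=> z w; rewrite pi_add //; apply: (hnormD Hip).
    + by move=> a z; rewrite pi_scale // (hnormZ Hip).
  move=> z0 eps ep; apply: (tnbhs_mono (Hcont Dxi z0 ep)) => z.
  by apply: le_lt_trans; apply: (hnorm_rev Hip).
by move=> z w; apply: (CS Hip).
Qed.


Lemma mulE z : mul z e = z.
Proof. by case: Hunit => _ _ _ h; case: (h z). Qed.

Lemma sm1' z : Gam z x -> forall u d, D u -> D d ->
  ip (pi (mul x y) u) (pi (star z) d) = ip (pi y u) (pi (mul (star x) (star z)) d).
Proof.
move=> G; apply: (polar Hip DD) => //; try exact: op_lin.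
move=> xi Dxi; case: Hsp => _ h _.
by have := h z _ e e G (phiPB Dxi) HBe HBe; rewrite !mulE.
Qed.

Lemma sm2' v : Gam y v -> forall u d, D u -> D d ->
  ip (pi (mul (star y) (star x)) u) (pi v d) = ip (pi (star x) u) (pi (mul y v) d).
Proof.
move=> G; apply: (polar Hip DD) => //; try exact: op_lin.
move=> xi Dxi; case: Hsp => _ _ h.
by have := h v _ e e G (phiPB Dxi) HBe HBe; rewrite !mulE.
Qed.

Lemma partA u : D u -> gdom (gclosure ip (op_graph D (pi x))) (pi y u).
Proof.
move=> Du; apply/(proj1 (Hqs x)) => z G.
exists (pi (mul x y) u) => s t [[d [Dd ->]] hadj].
have G' := GamS G.
have -> : t = pi (mul (star x) (star z)) d.
  apply: uniqD => d' Dd'.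
  rewrite -(hadj d' (pi x d')); last by split.
  by rewrite -wp // starK.
by rewrite (ipC Hip) -sm1' // -(ipC Hip).
Qed.

Lemma partC u : D u -> gclosure ip (op_graph D (pi x)) (pi y u) (pi (mul x y) u).
Proof.
move=> Du; have [v0 hv0] := partA Du.
suff <- : v0 = pi (mul x y) u by [].
have Gxy : Gam x y by case: Hsp.
apply: uniqD => d Dd; rewrite -wp //.
apply/eqP; rewrite eq_sym -subr_eq0; apply/eqP.
apply: (approx0 (a := hnorm ip (pi (star x) d)) (b := hnorm ip d)); rewrite ?(hnorm_ge0 Hip) //.
move=> eps ep; have [u' [v' [[Du' ->] h1 h2]]] := hv0 eps ep.
have -> : ip (pi (star x) d) (pi y u) - ip d v0 =
   ip (pi (star x) d) (pi y u - u') - ip d (v0 - pi x u').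
  by rewrite !(ipBr Hip) (adjL' x Du' Dd); ring.
apply: (le_trans (ler_normB _ _)); apply: lerD.
  by apply: (le_trans (CS Hip _ _)); rewrite ler_wpM2l ?(hnorm_ge0 Hip) // ltW.
by apply: (le_trans (CS Hip _ _)); rewrite ler_wpM2l ?(hnorm_ge0 Hip) // ltW.
Qed.

Lemma partB u v : dagger ip D (pi x) u v -> gdom (gclosure ip (dagger ip D (pi y))) v.
Proof.
move=> hd; have Du : D u by case: hd.
rewrite (dag_val hd).
apply/(proj2 (Hqs y)) => v' G.
exists (pi (mul (star y) (star x)) u) => s t [[d [Dd ->]] hadj].
have -> : t = pi (mul y v') d.
  apply: uniqD => d' Dd'.
  rewrite -(hadj d' (pi (star y) d')); last by split.
  by rewrite wp.
by rewrite (ipC Hip) -sm2' // -(ipC Hip).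
Qed.

End Main.

Theorem proposition3p13 (R : realType) (A : lmodType R[i]) (star : A -> A)
  (Gam : A -> A -> Prop) (mul : A -> A -> A) (P : (A -> R[i]) -> Prop)
  (B : A -> Prop) (e : A) (x y : A) :
  topological_partial_star_algebra star Gam mul P ->
  star_semisimple star Gam mul P ->
  multiplication_core star Gam mul P B ->
  is_unit star Gam mul e -> B e ->
  strong_product_wd star Gam mul (PB star Gam mul P B) B x y ->
  forall (H : lmodType R[i]) (ip : H -> H -> R[i]) (D : H -> Prop) (pi : A -> H -> H),
    is_hilbert ip ->
    star_rep star Gam mul ip D pi ->
    rep_cont P ip D pi ->
    quasi_symmetric star Gam ip D pi ->
    (forall b, B b -> in_LdaggerD ip D (pi b)) ->
    (forall u, D u -> pi e u = u) ->
    strong_product_op_wd ip D (pi x) (pi y) /\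
    strong_product_op_eq ip D (pi x) (pi y) (pi (mul x y)).
Proof.
move=> Htop _ Hcore Hunit HBe Hsp H ip D pi Hh Hrep Hcont Hqs HBD _.
split; first split.
- by move=> u Du; exact: (partA Htop Hcore Hunit HBe Hsp Hh Hrep Hcont Hqs HBD Du).
- by move=> u v hd; exact: (partB Htop Hcore Hunit HBe Hsp Hh Hrep Hcont Hqs HBD hd).
- by move=> u Du; exact: (partC Htop Hcore Hunit HBe Hsp Hh Hrep Hcont Hqs HBD Du).
Qed.
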